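(* Let $\mathcal{C}>2$ be a constant. Let $\mathcal{T}$ be a binary decision tree with $t$ internal nodes, and hence $t+1$ leaves, forming the set $\mathcal{L}$. Inputs $x$ are drawn from a fixed distribution, and each $x$ carries a label in $\{1,\dots,k\}$. For each leaf $l$, let $w_l$ be the probability that $x$ reaches $l$, so that $\sum_{l}w_l=1$. Let $\pi_{l,i}$ be the probability that $x$ has label $i$ given that it reaches $l$. Let $w=\max_{l\in\mathcal{L}}w_l$. Then the modified Gini-entropy \[ G_t^m=\sum_{l\in\mathcal{L}}w_l\sum_{i=1}^k\sqrt{\pi_{l,i}(\mathcal{C}-\pi_{l,i})} \] satisfies $\sqrt{\mathcal{C}-1}\le G_t^m\le (t+1)\,w\sqrt{k\mathcal{C}-1}$. *)

(* Defs.v *)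
From HB Require Import structures.
From mathcomp Require Import all_boot all_order all_algebra.
From mathcomp Require Import reals.
Set Implicit Arguments. Unset Strict Implicit. Unset Printing Implicit Defensive.
Import Order.TTheory GRing.Theory Num.Theory.
Local Open Scope ring_scope.

(* Leaves of a binary tree with t internal nodes: 'I_(t+1); labels: 'I_k.
   w l     = probability that x reaches leaf l,
   pi l i  = probability that x has label i given it reaches l. *)

Definition modGini (R : realType) (t k : nat) (C : R)
  (w : 'I_t.+1 -> R) (pi : 'I_t.+1 -> 'I_k -> R) : R :=
  \sum_(l < t.+1) w l * \sum_(i < k) Num.sqrt (pi l i * (C - pi l i)).

Definition maxWeight (R : realType) (t : nat) (w : 'I_t.+1 -> R) : R :=
  \big[Num.max/0]_(l < t.+1) w l.

(* Main.v *)
Require Import Defs.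
From HB Require Import structures.
From mathcomp Require Import all_boot all_order all_algebra.
From mathcomp Require Import reals.
From mathcomp Require Import ring lra.
Import Order.TTheory GRing.Theory Num.Theory.
Local Open Scope ring_scope.

Lemma term_lower (R : realType) (C p : R) : 2 < C -> 0 <= p <= 1 ->
  p * Num.sqrt (C - 1) <= Num.sqrt (p * (C - p)).
Proof.
move=> hC /andP[p0 p1].
have -> : p * Num.sqrt (C - 1) = Num.sqrt (p ^+ 2 * (C - 1)).
  by rewrite sqrtrM ?sqr_ge0 // sqrtr_sqr ger0_norm.
apply: ler_wsqrtr.
have h1 : 0 <= p * (1 - p) by apply: mulr_ge0; lra.
have h2 : 0 <= p * (1 - p) * C by apply: mulr_ge0; lra.
nra.
Qed.

Lemma leaf_lower (R : realType) (C : R) k (p : 'I_k -> R) : 2 < C ->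
  (forall i, 0 <= p i <= 1) -> \sum_(i < k) p i = 1 ->
  Num.sqrt (C - 1) <= \sum_(i < k) Num.sqrt (p i * (C - p i)).
Proof.
move=> hC hp hs.
apply: le_trans (ler_sum _ (fun i _ => @term_lower _ C (p i) hC (hp i))).
by rewrite -mulr_suml hs mul1r.
Qed.

Lemma amgm (R : realType) (x m : R) : 0 <= x -> 0 < m ->
  Num.sqrt x <= (x + m ^+ 2) / (2 * m).
Proof.
move=> hx hm; rewrite ler_pdivlMr; last by nra.
have hsq := sqr_sqrtr hx.
have h := sqr_ge0 (Num.sqrt x - m).
rewrite -[X in _ <= X + _]hsq; nra.
Qed.

Lemma fin_step (R : realType) (C S s K : R) : K != 0 -> s ^+ 2 = K * C - 1 ->
  0 <= S - 2 / K * 1 + K^-1 ^+ 2 * K ->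
  C - S + (s / K) ^+ 2 * K <= s * (2 * (s / K)).
Proof.
move=> hK hss hsq.
have q1 : (s / K) ^+ 2 * K = C - K^-1 by rewrite exprMn hss; field.
have q2 : s * (2 * (s / K)) = 2 * C - 2 * K^-1.
  have -> : s * (2 * (s / K)) = s ^+ 2 * (2 / K) by ring.
  by rewrite hss; field.
have q3 : K^-1 ^+ 2 * K = K^-1 by field.
rewrite q1 q2; rewrite q3 in hsq; lra.
Qed.

Lemma leaf_upper (R : realType) (C : R) k (p : 'I_k -> R) : 2 < C ->
  (forall i, 0 <= p i <= 1) -> \sum_(i < k) p i = 1 ->
  \sum_(i < k) Num.sqrt (p i * (C - p i)) <= Num.sqrt (k%:R * C - 1).
Proof.
move=> hC hp hs.
case: k p hp hs => [|k] p hp hs; first by rewrite big_ord0 in hs; move: (@oner_neq0 R); rewrite hs eqxx.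
set K : R := k.+1%:R.
have hK : 1 <= K by rewrite /K ler1n.
have hKC : 0 < K * C - 1 by nra.
set s := Num.sqrt (K * C - 1).
have hs0 : 0 < s by rewrite sqrtr_gt0.
have hss : s ^+ 2 = K * C - 1 by rewrite sqr_sqrtr // ltW.
set m := s / K.
have hm : 0 < m by rewrite divr_gt0 // (lt_le_trans ltr01 hK).
have hKK : K / K = 1 by rewrite divff // gt_eqF // (lt_le_trans ltr01 hK).
apply: le_trans (ler_sum _ (fun i _ => @amgm _ (p i * (C - p i)) m _ hm)) _.
  by move=> i _; have := hp i; nra.
rewrite -mulr_suml big_split /= sumr_const card_ord.
have hsq : 0 <= \sum_(i < k.+1) (p i - K^-1) ^+ 2 by apply: sumr_ge0 => i _; exact: sqr_ge0.
have e : \sum_(i < k.+1) (p i - K^-1) ^+ 2 =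
   \sum_(i < k.+1) (p i * p i) - 2 * K^-1 * \sum_(i < k.+1) p i + K^-1 ^+2 *+ k.+1.
  rewrite (eq_bigr (fun i => p i * p i - 2 * K^-1 * p i + K^-1 ^+ 2)); last by move=> i _; ring.
  by rewrite big_split /= sumrB -mulr_sumr sumr_const card_ord.
rewrite e hs in hsq.
have -> : \sum_(i < k.+1) p i * (C - p i) = C - \sum_(i < k.+1) (p i * p i).
  rewrite -[C in RHS]mul1r -hs mulr_suml -sumrB; apply: eq_bigr => i _; ring.
rewrite ler_pdivrMr; last by nra.
have hKi : K^-1 ^+ 2 * K = K^-1 by rewrite expr2 -mulrA mulVf ?mulr1 // gt_eqF // (lt_le_trans ltr01 hK).
have hK0 : K != 0 by rewrite gt_eqF // (lt_le_trans ltr01 hK).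
have nK : forall x : R, x *+ k.+1 = x * K by move=> x; rewrite /K mulr_natr.
rewrite !nK in hsq *; rewrite /m.
exact: fin_step hK0 hss hsq.
Qed.

Theorem lemma7 (R : realType) (C : R) (t k : nat)
  (w : 'I_t.+1 -> R) (pi : 'I_t.+1 -> 'I_k -> R) :
  2 < C ->
  (forall l, 0 <= w l) ->
  \sum_(l < t.+1) w l = 1 ->
  (forall l i, 0 <= pi l i <= 1) ->
  (forall l, 0 < w l -> \sum_(i < k) pi l i = 1) ->
  Num.sqrt (C - 1) <= modGini C w pi /\
  modGini C w pi <= (t.+1)%:R * maxWeight w * Num.sqrt (k%:R * C - 1).
Proof.
move=> hC hw hws hp hps; rewrite /modGini; split.
  rewrite -[X in X <= _]mul1r; rewrite -{1}hws mulr_suml; apply: ler_sum => l _.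
  have := hw l; rewrite le0r => /orP[/eqP->|wp]; first by rewrite !mul0r.
  rewrite ler_pM2l //; apply: leaf_lower => //; exact: hps.
have hM : forall l, w l <= maxWeight w by move=> l; exact: le_bigmax.
have hM0 : 0 <= maxWeight w := le_trans (hw ord0) (hM ord0).
have -> : (t.+1)%:R * maxWeight w * Num.sqrt (k%:R * C - 1) =
  \sum_(l < t.+1) maxWeight w * Num.sqrt (k%:R * C - 1).
  by rewrite sumr_const card_ord -mulrA mulr_natl.
apply: ler_sum => l _.
have := hw l; rewrite le0r => /orP[/eqP->|wp].
  by rewrite mul0r mulr_ge0 // sqrtr_ge0.
apply: ler_pM => //.
- by apply: sumr_ge0 => i _; exact: sqrtr_ge0.
- apply: leaf_upper => //; exact: hps.
Qed.
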